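(* Let $L$ be a bounded distributive lattice and $f\colon L^n\to L$ an aggregation function. If $f$ is inf-homogeneous and comonotone supremal, or $f$ is sup-homogeneous and comonotone infimal, then $f$ is a Sugeno integral, i.e. $f=\mathsf{Su}_m$ for some $L$-valued capacity $m$ on $[n]$.
   Context: $[n]=\{1,\dots,n\}$. An aggregation function is a monotone $f\colon L^n\to L$ with $f(0,\dots,0)=0$, $f(1,\dots,1)=1$. An $L$-valued capacity is $m\colon2^{[n]}\to L$, monotone, $m(\emptyset)=0$, $m([n])=1$; $\mathsf{Su}_m(\mathbf x)=\bigvee_{I\subseteq[n]}\big(m(I)\wedge\bigwedge_{i\in I}x_i\big)$ (empty meet $=1$). For $c\in L$, $\mathbf c=(c,\dots,c)$; $f$ is inf-homogeneous if $f(\mathbf c\wedge\mathbf x)=c\wedge f(\mathbf x)$, sup-homogeneous if $f(\mathbf c\vee\mathbf x)=c\vee f(\mathbf x)$, for all $\mathbf x\in L^n,c\in L$. $\mathbf x,\mathbf y$ are comonotone if for all $i,j$: ($x_i\le x_j$ and $y_i\le y_j$) or ($x_i\ge x_j$ and $y_i\ge y_j$). $f$ is comonotone supremal (resp. infimal) if $f(\mathbf x\vee\mathbf y)=f(\mathbf x)\vee f(\mathbf y)$ (resp. $f(\mathbf x\wedge\mathbf y)=f(\mathbf x)\wedge f(\mathbf y)$) for all comonotone $\mathbf x,\mathbf y$. *)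

(* Defs.v *)
From HB Require Import structures.
From mathcomp Require Import all_boot all_order.
Set Implicit Arguments. Unset Strict Implicit. Unset Printing Implicit Defensive.
Import Order.TTheory.
Local Open Scope order_scope.

Section Defs.
Context {d : Order.disp_t} {L : tbDistrLatticeType d} {n : nat}.

Definition cst (c : L) : 'I_n -> L := fun _ => c.
Definition vmeet (x y : 'I_n -> L) : 'I_n -> L := fun i => x i `&` y i.
Definition vjoin (x y : 'I_n -> L) : 'I_n -> L := fun i => x i `|` y i.
Definition vle (x y : 'I_n -> L) : Prop := forall i, x i <= y i.

Definition aggregation (f : ('I_n -> L) -> L) : Prop :=
  [/\ (forall x y, vle x y -> f x <= f y),
      f (cst \bot) = \bot & f (cst \top) = \top].

Definition capacity (m : {set 'I_n} -> L) : Prop :=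
  [/\ (forall I J : {set 'I_n}, I \subset J -> m I <= m J),
      m set0 = \bot & m setT = \top].

Definition sugeno (m : {set 'I_n} -> L) (x : 'I_n -> L) : L :=
  \join_(I : {set 'I_n}) (m I `&` \meet_(i in I) x i).

Definition inf_homogeneous (f : ('I_n -> L) -> L) : Prop :=
  forall x c, f (vmeet (cst c) x) = c `&` f x.
Definition sup_homogeneous (f : ('I_n -> L) -> L) : Prop :=
  forall x c, f (vjoin (cst c) x) = c `|` f x.

Definition comonotone (x y : 'I_n -> L) : Prop :=
  forall i j, (x i <= x j /\ y i <= y j) \/ (x j <= x i /\ y j <= y i).

Definition comonotone_supremal (f : ('I_n -> L) -> L) : Prop :=
  forall x y, comonotone x y -> f (vjoin x y) = f x `|` f y.
Definition comonotone_infimal (f : ('I_n -> L) -> L) : Prop :=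
  forall x y, comonotone x y -> f (vmeet x y) = f x `&` f y.
End Defs.

(* Main.v *)
Require Import Defs.
From HB Require Import structures.
From mathcomp Require Import all_boot all_order.
Import Order.TTheory.
Local Open Scope order_scope.

Section Aux.
Context {d : Order.disp_t} {L : tbDistrLatticeType d} {n : nat}.

Lemma meet_joins_le (I : finType) (x : L) (P : {pred I}) (F : I -> L) :
  x `&` \join_(i | P i) F i <= \join_(i | P i) (x `&` F i).
Proof.
elim/big_rec2: _ => [|i y z Pi IH]; first by rewrite meetx0.
rewrite meetUr leUx; apply/andP; split; first exact: leUl.
exact: (le_trans IH (leUr _ _)).
Qed.

Definition ind (I : {set 'I_n}) : 'I_n -> L :=
  fun i => if i \in I then \top else \bot.
Definition upd (w : 'I_n -> L) (j : 'I_n) : 'I_n -> L :=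
  fun i => if i == j then \top else w i.

Lemma step (g : ('I_n -> L) -> L) (m : {set 'I_n} -> L) w :
  (forall x y, vle x y -> g x <= g y) ->
  (forall I J : {set 'I_n}, I \subset J -> m I <= m J) ->
  g w <= m [set i | w i == \top] `|`
                  \join_(j | j \notin [set i | w i == \top]) w j ->
  (forall j, j \notin [set i | w i == \top] -> g (upd w j) <= sugeno m (upd w j)) ->
  g w <= sugeno m w.
Proof.
move=> gmon mmon gH IH.
set T := [set i | w i == \top] in gH IH *.
have -> : g w = g w `&` (m T `|` \join_(j | j \notin T) w j) by apply/esym/meet_l.
rewrite meetUr leUx; apply/andP; split.
  apply: le_trans (leIr _ _) _.
  rewrite /sugeno; apply: (joins_min (j := T)) => //.
  rewrite lexI lexx /=; apply/meetsP => i; rewrite inE => /eqP ->; exact: lex1.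
apply: le_trans (meet_joins_le _ _ _ _) _.
apply/joinsP => j jT.
have h1 : g w `&` w j <= sugeno m (upd w j) `&` w j.
  apply: leI2 (lexx _); apply: le_trans (IH j jT).
  apply: gmon => i; rewrite /upd; case: (i == j) => //; exact: lex1.
apply: le_trans h1 _.
rewrite meetC; apply: le_trans (meet_joins_le _ _ _ _) _.
apply/joinsP => I _.
apply: (joins_min (j := j |: I)) => //.
rewrite meetCA lexI; apply/andP; split.
  by apply: le_trans (leIl _ _) _; apply: mmon; exact: subsetUr.
apply/meetsP => i; rewrite in_setU1 => /orP [/eqP -> | iI].
  exact: (le_trans (leIr _ _) (leIl _ _)).
case: (eqVneq i j) => [-> | ne]; first exact: (le_trans (leIr _ _) (leIl _ _)).
apply: le_trans (leIr _ _) _; apply: le_trans (leIr _ _) _; apply: le_trans (meets_inf (P := fun k => k \in I) (upd w j) iI) _.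
by rewrite /upd (negbTE ne).
Qed.

Lemma key (g : ('I_n -> L) -> L) (m : {set 'I_n} -> L) :
  (forall x y, vle x y -> g x <= g y) ->
  (forall I J : {set 'I_n}, I \subset J -> m I <= m J) ->
  (forall w, g w <= m [set i | w i == \top] `|`
                  \join_(j | j \notin [set i | w i == \top]) w j) ->
  forall w, g w <= sugeno m w.
Proof.
move=> gmon mmon gH.
suff: forall k w, (#|[set i | w i != \top]| <= k)%N -> g w <= sugeno m w.
  by move=> H w; apply: (H _ w (leqnn _)).
elim=> [|k IH] w Hk; apply: step => // j; rewrite inE => wj.
- move: Hk; rewrite leqn0 cards_eq0 => /eqP Hk.
  have : j \in [set i | w i != \top] by rewrite inE.
  by rewrite Hk inE.
- apply: IH; rewrite -ltnS; apply: leq_trans Hk; apply: proper_card.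
  apply/properP; split.
    apply/subsetP => i; rewrite !inE /upd; case: ifP => _ //; by rewrite eqxx.
  by exists j; rewrite !inE /upd ?eqxx.
Qed.

Lemma ind_comon (I : {set 'I_n}) (c : L) : comonotone (ind I) (cst c).
Proof.
move=> i j; rewrite /ind /cst.
by case: (i \in I); case: (j \in I); rewrite ?lexx ?le0x ?lex1; auto.
Qed.
End Aux.

Theorem corollary3 (d : Order.disp_t) (L : tbDistrLatticeType d) (n : nat)
    (f : ('I_n -> L) -> L) :
  aggregation f ->
  (inf_homogeneous f /\ comonotone_supremal f) \/
  (sup_homogeneous f /\ comonotone_infimal f) ->
  exists m : {set 'I_n} -> L, capacity m /\ forall x, f x = sugeno m x.
Proof.
case=> fmon fbot ftop H.
have mmon : forall I J : {set 'I_n}, I \subset J -> f (ind I) <= f (ind J).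
  move=> I J /subsetP IJ; apply: fmon => i; rewrite /ind.
  by case: ifP => iI; rewrite ?(IJ _ iI) ?lexx ?le0x.
exists (fun I => f (ind I)); split.
  split => //.
    apply/le_anti; rewrite le0x andbT -fbot; apply: fmon => i.
    by rewrite /ind inE lexx.
  apply/le_anti; rewrite lex1 /= -{1}ftop; apply: fmon => i.
  by rewrite /ind inE lexx.
move=> x; apply/le_anti/andP; split.
  apply: key => //.
  move=> w; set T := [set i | w i == \top]; set s := \join_(j | j \notin T) w j.
  have ws : forall i, w i <= (ind T) i `|` cst s i.
    move=> i; rewrite /ind /cst; case: ifP => iT; first by rewrite join1x lex1.
    by rewrite join0x; apply: (joins_min (j := i)) => //; rewrite iT.
  case: H => [[ih cs] | [sh ci]].
    apply: le_trans (fmon _ (vjoin (ind T) (cst s)) ws) _.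
    rewrite cs; last exact: ind_comon.
    apply: leU2 (lexx _) _.
    apply: le_trans (fmon _ (vmeet (cst s) (cst \top)) _) _.
      by move=> i; rewrite /vmeet /cst meetx1.
    by rewrite ih leIl.
  apply: le_trans (fmon _ (vjoin (cst s) (ind T)) _) _.
    by move=> i; rewrite /vjoin joinC.
  by rewrite sh joinC.
apply/joinsP => I _.
set c := \meet_(i in I) x i.
have indle : forall i, (ind I) i `&` cst c i <= x i.
  move=> i; rewrite /ind /cst; case: ifP => iI; last by rewrite meet0x le0x.
  by rewrite meet1x; apply: meets_inf.
case: H => [[ih cs] | [sh ci]].
  rewrite meetC -ih; apply: fmon => i; rewrite /vmeet meetC; exact: indle.
apply: le_trans (fmon (vmeet (ind I) (cst c)) x indle).
rewrite ci; last exact: ind_comon.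
apply: leI2 (lexx _) _.
apply: le_trans (leUl c (f (cst \bot))) _.
rewrite -sh; apply: fmon => i; rewrite /vjoin /cst joinx0.
exact: lexx.
Qed.
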